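(* Let $I$ be a partially ordered set and let $E$ be a locally convex space which admits an $I$-decreasing base of neighbourhoods of zero. Then $E$ has an $\mathbb{N}^I$-increasing family of bounded sets covering $E$ which swallows all bounded subsets of $E$. Consequently, the strong dual $E'_\beta$ of $E$ has an $\mathbb{N}^I$-decreasing base of neighbourhoods of zero.
   Context: All locally convex spaces are Hausdorff. For a partially ordered set $I$, a family $\{A_i\}_{i\in I}$ of sets is $I$-increasing (resp. $I$-decreasing) if $A_i\subseteq A_j$ (resp. $A_i\supseteq A_j$) whenever $i\le j$. The set $\mathbb{N}^I$ is ordered pointwise: $\alpha\le\beta$ iff $\alpha(i)\le\beta(i)$ for all $i\in I$. A family $\{A_j\}$ swallows a family $\mathcal{B}$ if every $B\in\mathcal{B}$ is contained in some $A_j$. $E'_\beta=(E',\beta(E',E))$ is the topological dual with the topology of uniform convergence on bounded subsets of $E$. *)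

(* Defs.v *)
From HB Require Import structures.
From mathcomp Require Import all_boot all_order all_algebra.
From mathcomp Require Import all_classical all_reals all_analysis.
Set Implicit Arguments. Unset Strict Implicit. Unset Printing Implicit Defensive.
Import Order.TTheory GRing.Theory Num.Theory.
Local Open Scope classical_set_scope.
Local Open Scope ring_scope.

Definition tvs_bounded (R : realType) (E : tvsType R) (B : set E) : Prop :=
  forall U : set E, nbhs (0 : E) U ->
    exists r : R, 0 < r /\
      forall l : R, r <= `|l| -> B `<=` [set l *: u | u in U].

Definition decreasing_nbhs0_base (d : Order.disp_t) (I : porderType d)
    (R : realType) (E : tvsType R) (U : I -> set E) : Prop :=
  [/\ (forall i, nbhs (0 : E) (U i)),
      (forall W : set E, nbhs (0 : E) W -> exists i, U i `<=` W) &
      (forall i j : I, (i <= j)%O -> U j `<=` U i)].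

Definition le_NI (I : Type) (a b : I -> nat) : Prop := forall i, (a i <= b i)%N.

Definition tvs_dual (R : realType) (E : tvsType R) : set (E -> R^o) :=
  [set f | linear f /\ continuous f].

(* The space of all functions E -> R with the topology of uniform convergence
   on bounded subsets of E; E'_beta is the subspace @tvs_dual R E of it. *)
Notation strong_fun R E := {family @tvs_bounded R E, E -> R^o}.

Definition strong_dual_decreasing_nbhs0_base (I : Type)
    (R : realType) (E : tvsType R) (V : (I -> nat) -> set (E -> R^o)) : Prop :=
  [/\ (forall a, V a `<=` @tvs_dual R E),
      (forall a, exists W : set (strong_fun R E),
          nbhs ((fun=> 0) : strong_fun R E) W /\ V a = W `&` @tvs_dual R E),
      (forall W : set (strong_fun R E),
          nbhs ((fun=> 0) : strong_fun R E) W -> exists a, V a `<=` W) &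
      (forall a b, le_NI a b -> V b `<=` V a)].

(* Main.v *)
Require Import Defs.
From HB Require Import structures.
From mathcomp Require Import all_boot all_order all_algebra.
From mathcomp Require Import all_classical all_reals all_analysis.
From mathcomp Require Import lra.
Import Order.TTheory GRing.Theory Num.Theory.
Local Open Scope classical_set_scope.
Local Open Scope ring_scope.

Section Aux.
Context (R : realType) (E : tvsType R).

Lemma bounded1 (x : E) : tvs_bounded [set x].
Proof.
move=> U U0.
have := @scale_continuous R E (0, x) U.
rewrite /= scale0r => /(_ U0) [] /= B [B1 B2] BU.
move/nbhs_ballP: B1 => [e e0 Be].
exists (2 / e); split; first by rewrite divr_gt0.
move=> l hl y -> {y}.
have l0 : l != 0.
  apply/eqP => l0; move: hl; rewrite l0 normr0 leNgt divr_gt0 //.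
exists (l^-1 *: x); last by rewrite scalerA divff // scale1r.
apply: (BU (l^-1, x)); split => /=; last exact: nbhs_singleton.
apply: Be; rewrite -ball_normE /= sub0r normrN normrV ?unitfE //.
rewrite -[ltLHS]div1r ltr_pdivrMr ?normr_gt0 //.
apply: (lt_le_trans _ (ler_wpM2l (ltW e0) hl)).
by rewrite mulrCA divff ?gt_eqF // mulr1 ltr1n.
Qed.


Lemma bounded_scale (A : set E) (c : R) : 0 < c -> tvs_bounded A ->
  tvs_bounded [set c *: x | x in A].
Proof.
move=> c0 Ab W W0; have [r [r0 hr]] := Ab W W0.
exists (r * c); split; first by rewrite mulr_gt0.
move=> l hl _ [x Ax <-].
have : r <= `|l / c|.
  by rewrite normrM normrV ?unitfE ?gt_eqF// (gtr0_norm c0) ler_pdivlMr.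
move=> /hr /(_ x Ax) [u Wu hu]; exists u => //.
by rewrite -hu scalerA mulrCA divff ?gt_eqF // mulr1.
Qed.

Lemma boundedU (A B : set E) : tvs_bounded A -> tvs_bounded B ->
  tvs_bounded (A `|` B).
Proof.
move=> Ab Bb W W0; have [r1 [r10 h1]] := Ab W W0; have [r2 [r20 h2]] := Bb W W0.
exists (Num.max r1 r2); split; first by rewrite lt_max r10.
move=> l; rewrite ge_max => /andP[l1 l2] x [Ax|Bx].
  exact: h1.
exact: h2.
Qed.

Lemma bounded0 : tvs_bounded (set0 : set E).
Proof. by move=> W W0; exists 1; split => // l _ x. Qed.

Definition Fb : set_system (E -> R^o) := [set W | exists A, tvs_bounded A /\
  exists2 e : R, 0 < e & [set g : E -> R^o | forall x, A x -> `|g x| < e] `<=` W].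

Lemma Fb_filter : Filter Fb.
Proof.
apply: Build_Filter.
- by exists set0; split; [exact: bounded0 | exists 1 => //].
- move=> W1 W2 [A1 [b1 [e1 e1p s1]]] [A2 [b2 [e2 e2p s2]]].
  exists (A1 `|` A2); split; first exact: boundedU.
  exists (Num.min e1 e2); first by rewrite lt_min e1p.
  move=> g hg; split.
    by apply: s1 => x Ax; have := hg x (or_introl Ax); rewrite lt_min => /andP[].
  by apply: s2 => x Ax; have := hg x (or_intror Ax); rewrite lt_min => /andP[].
- by move=> P Q PQ [A [Ab [e e0 s]]]; exists A; split => //; exists e => //;
    apply: subset_trans PQ.
Qed.

Lemma Fb_nbhs (W : set (strong_fun R E)) :
  nbhs ((fun=> 0) : strong_fun R E) W -> Fb W.
Proof.
have FF := Fb_filter.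
have Fcvg : {family (@tvs_bounded R E), Fb --> ((fun=> 0) : E -> R^o)}.
  apply/fam_cvgP => A Ab P /uniform_nbhs [Ent [entE sub]].
  rewrite -entourage_from_ballE in entE; case: entE => e e0 sube.
  exists A; split => //; exists e => // g hg; apply: sub => y Ay; apply: sube.
  by rewrite /= -ball_normE /= sub0r normrN; exact: hg.
exact: Fcvg.
Qed.
End Aux.

Section Bsets.
Context (d : Order.disp_t) (I : porderType d) (R : realType) (E : tvsType R).
Variable U : I -> set E.

Definition Bset (a : I -> nat) : set E :=
  [set x | forall i (l : R), (a i)%:R + 1 <= `|l| -> [set l *: u | u in U i] x].

Lemma Bset_mono a b : le_NI a b -> Bset a `<=` Bset b.
Proof.
move=> ab x Bx i l hl; apply: Bx; apply: le_trans hl.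
by rewrite lerD2r ler_nat.
Qed.

Lemma Bset_bounded a : (forall W : set E, nbhs (0 : E) W -> exists i, U i `<=` W) ->
  tvs_bounded (Bset a).
Proof.
move=> base W W0; have [i UW] := base W W0.
exists ((a i)%:R + 1); split; first by rewrite ltr_wpDl.
move=> l hl x Bx; have [u Uu <-] := Bx i l hl.
by exists u => //; apply: UW.
Qed.

Lemma Bset_swallow (A : set E) : (forall i, nbhs (0 : E) (U i)) ->
  tvs_bounded A -> exists a, A `<=` Bset a.
Proof.
move=> Ui Ab.
have /choice [r hr] : forall i, exists r : R, 0 < r /\
      forall l : R, r <= `|l| -> A `<=` [set l *: u | u in U i].
  by move=> i; apply: Ab.
exists (fun i => Num.truncn (r i)) => x Ax i l hl.
apply: (proj2 (hr i) l) => //; apply: le_trans hl.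
by rewrite natr1 ltW // truncnS_gt.
Qed.

End Bsets.
Arguments Bset {d I R E} U a.
Theorem proposition2p1 (d : Order.disp_t) (I : porderType d)
    (R : realType) (E : tvsType R) :
  hausdorff_space E ->
  (exists U : I -> set E, decreasing_nbhs0_base U) ->
  (exists B : (I -> nat) -> set E,
      [/\ (forall a, tvs_bounded (B a)),
          (forall a b, le_NI a b -> B a `<=` B b),
          (forall x : E, exists a, B a x) &
          (forall A : set E, tvs_bounded A -> exists a, A `<=` B a)])
  /\ (exists V : (I -> nat) -> set (E -> R^o),
        strong_dual_decreasing_nbhs0_base V).
Proof.
move=> _ [U [Unb base dec]].
have Bb : forall a, tvs_bounded (Bset U a) := fun a => @Bset_bounded _ _ _ _ U a base.
have Bsw : forall A, tvs_bounded A -> exists a, A `<=` Bset U a :=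
  fun A => @Bset_swallow _ _ _ _ U A Unb.
split.
  exists (Bset U); split => //; first exact: (@Bset_mono _ _ _ _ U).
  by move=> x; have [a ha] := Bsw _ (@bounded1 R E x); exists a; exact: ha.
exists (fun a => [set f : E -> R^o | tvs_dual f /\
  forall x, Bset U a x -> `|f x| <= 1]).
split.
- by move=> a f [].
- move=> a; exists [set g : strong_fun R E | forall x, Bset U a x -> `|g x| <= 1].
  split.
    apply: (filterS _ (@fam_nbhs _ _ (@tvs_bounded R E) (Bset U a) _
      ((fun=> 0) : strong_fun R E) (entourage_ball _ 1%:pos) (Bb a))).
    move=> g hg x Bx; have := hg x Bx.
    by rewrite /= -ball_normE /= sub0r normrN => /ltW.
  apply/seteqP; split => f /=.
    by move=> [Df Hf]; split.
  by move=> [Hf Df]; split.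
- move=> W /(@Fb_nbhs R E) [A [Ab [e e0 sub]]].
  have [a ha] := Bsw _ (@bounded_scale R E A (2 / e) (divr_gt0 (ltr0Sn _ 1) e0) Ab).
  exists a => f [[linf _] Hf]; apply: sub => x Ax.
  have f0 : f 0 = 0.
    have := linf 1 0 0; rewrite !scale1r !addr0 => H.
    by apply: (@addrI _ (f 0)); rewrite addr0 -H.
  have fZ : f ((2 / e) *: x) = 2 / e * f x.
    by have := linf (2 / e) x 0; rewrite !addr0 f0 addr0.
  have hx : [set (2 / e) *: x | x in A] ((2 / e) *: x) by exists x.
  have := Hf _ (ha _ hx); rewrite fZ normrM gtr0_norm ?divr_gt0 // => h.
  have := ler_wpM2l (ltW e0) h.
  rewrite mulr1 mulrA mulrCA divff ?gt_eqF // mulr1 => h2.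
  lra.
- by move=> a b ab f [Df Hf]; split => // x Bx; apply: Hf; exact: (@Bset_mono _ _ _ _ U a b ab _ Bx).
Qed.
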